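(* Let $q\in X^*\setminus\{e\}$ and $\xi\in X^\omega$. The following are equivalent: (i) $\xi$ is quasiperiodic with quasiperiod $q$; (ii) the set $\mathrm{pref}(\xi)\cap Q_q$ is infinite; (iii) $\mathrm{pref}(\xi)\subseteq\mathrm{pref}(Q_q)$.
   Context: $X$ is a finite alphabet with $|X|\ge 2$; $X^*$ the finite words (empty word $e$), $X^\omega$ the infinite words; $|w|$ is length; $w\sqsubseteq\eta$ means $w$ is a prefix of $\eta$. For $B\subseteq X^*\cup X^\omega$ (or a single word), $\mathrm{pref}(B)$ is the set of all finite prefixes of elements of $B$. A word $\eta\in X^*\cup X^\omega$ is quasiperiodic with quasiperiod $q\in X^*\setminus\{e\}$ if for every natural number $j<|\eta|$ there is a prefix $u_j\sqsubseteq\eta$ with $j-|q|<|u_j|\le j$ and $u_j\cdot q\sqsubseteq\eta$. $Q_q$ is the set of finite words quasiperiodic with quasiperiod $q$ (including $e$). *)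

(* Defs.v *)
From mathcomp Require Import all_boot.
Set Implicit Arguments. Unset Strict Implicit. Unset Printing Implicit Defensive.

Definition ipref (X : Type) (w : seq X) (xi : nat -> X) : Prop :=
  w = mkseq xi (size w).

(* Quasiperiodicity of a finite word w with quasiperiod q:
   for every j < |w| there is a prefix u of w with j - |q| < |u| <= j
   and u q a prefix of w.  (j - |q| < |u| written as j < |u| + |q| over nat.) *)
Definition quasiper_fin (X : eqType) (q w : seq X) : Prop :=
  forall j, j < size w ->
    exists u : seq X, [/\ prefix u w, j < size u + size q, size u <= j
                          & prefix (u ++ q) w].

Definition quasiper_inf (X : eqType) (q : seq X) (xi : nat -> X) : Prop :=
  forall j,
    exists u : seq X, [/\ ipref u xi, j < size u + size q, size u <= j
                          & ipref (u ++ q) xi].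

Definition Qset (X : eqType) (q : seq X) : seq X -> Prop := quasiper_fin q.

Definition prefQ (X : eqType) (q : seq X) (w : seq X) : Prop :=
  exists v, Qset q v /\ prefix w v.

Definition fin_set (X : eqType) (S : seq X -> Prop) : Prop :=
  exists l : seq (seq X), forall w, S w -> w \in l.

(* Main.v *)
Require Import Defs.
From mathcomp Require Import all_boot.
From Stdlib Require Classical_Prop.
Lemma take_mk (X : Type) (xi : nat -> X) k n :
  take k (mkseq xi n) = mkseq xi (minn k n).
Proof. by rewrite /mkseq -map_take take_iota. Qed.
Lemma L1 (X : eqType) (xi : nat -> X) u w :
  prefix u w -> ipref w xi -> ipref u xi.
Proof.
move=> Hp Hw; have Hs := size_prefix Hp.
move: Hp; rewrite prefixE /ipref => /eqP <-.
by rewrite {1}Hw take_mk size_take_min.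
Qed.
Lemma L2 (X : eqType) (xi : nat -> X) u w :
  ipref u xi -> ipref w xi -> size u <= size w -> prefix u w.
Proof.
rewrite /ipref prefixE => Hu Hw H; rewrite {2}Hu {1}Hw take_mk.
by rewrite (minn_idPl H).
Qed.
Lemma sz_in (X : eqType) (l : seq (seq X)) w : w \in l -> size w <= sumn (map size l).
Proof.
elim: l => //= a l IH; rewrite in_cons => /orP [/eqP -> | /IH]; first exact: leq_addr.
move=> H; exact: (leq_trans H (leq_addl _ _)).
Qed.
Lemma L3 (X : eqType) (a w v : seq X) :
  prefix a v -> prefix w v -> size a <= size w -> prefix a w.
Proof.
move=> Ha /prefixP [s Hv] H; move: Ha; by rewrite Hv !prefixE takel_cat.
Qed.

Lemma dirA (X : eqType) (q : seq X) xi :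
  quasiper_inf q xi -> ~ fin_set (fun w => ipref w xi /\ Qset q w).
Proof.
move=> Hq [l Hl].
case: (Hq (sumn (map size l))) => u0 [Hu0 HN Hs Huq].
have Qv : Qset q (u0 ++ q).
  move=> j; rewrite size_cat => Hj.
  case: (leqP (size u0) j) => Hj0.
    by exists u0; split => //; [exact: prefix_prefix | exact: prefix_refl].
  case: (Hq j) => u [Hu Hju Hsu Huq']; exists u; split => //.
    apply: L2 Hu Huq _; rewrite size_cat.
    exact: leq_trans (ltnW (leq_ltn_trans Hsu Hj0)) (leq_addr _ _).
  apply: L2 Huq' Huq _; rewrite !size_cat leq_add2r.
  exact: ltnW (leq_ltn_trans Hsu Hj0).
have := @sz_in _ l _ (Hl _ (conj Huq Qv)); by rewrite size_cat leqNgt HN.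
Qed.

Lemma dirB (X : eqType) (q : seq X) xi :
  ~ fin_set (fun w => ipref w xi /\ Qset q w) -> forall w, ipref w xi -> prefQ q w.
Proof.
move=> Hnf w Hw; apply: Classical_Prop.NNPP => Hn; apply: Hnf.
exists (map (mkseq xi) (iota 0 (size w))) => v [Hv Qv].
case: (leqP (size w) (size v)) => H.
  by exfalso; apply: Hn; exists v; split => //; exact: L2 Hw Hv H.
by rewrite Hv; apply: map_f; rewrite mem_iota add0n H.
Qed.

Lemma dirC (X : eqType) (q : seq X) (hq : q != [::]) xi :
  (forall w, ipref w xi -> prefQ q w) -> quasiper_inf q xi.
Proof.
move=> H j.
have Pw : ipref (mkseq xi (j + size q)) xi by rewrite /ipref size_mkseq.
have [v [Qv Pv]] := H _ Pw.
have Sw : size (mkseq xi (j + size q)) = j + size q by rewrite size_mkseq.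
have Hjv : j < size v.
  apply: leq_trans (size_prefix Pv); rewrite Sw -addn1 leq_add2l lt0n size_eq0 //.
case: (Qv j Hjv) => u [Pu Hju Hsu Puq].
have Puqw : prefix (u ++ q) (mkseq xi (j + size q)).
  by apply: L3 Puq Pv _; rewrite Sw size_cat leq_add2r.
exists u; split => //; [exact: L1 (catl_prefix Puqw) Pw | exact: L1 Puqw Pw].
Qed.

Theorem corollary2 (X : finType) (hX : 1 < #|X|) (q : seq X) (hq : q != [::])
    (xi : nat -> X) :
  (quasiper_inf q xi <->
     ~ fin_set (fun w => ipref w xi /\ Qset q w)) /\
  (quasiper_inf q xi <->
     (forall w, ipref w xi -> prefQ q w)).
Proof.
split; split.
- exact: dirA.
- move=> H; exact: (@dirC _ q hq xi (@dirB _ q xi H)).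
- by move=> H; apply: dirB; exact: dirA.
- exact: dirC.
Qed.
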